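(* Let $p+q=p'+q'=n\ge3$. If there is an isomorphism $\mathbb{O}_{p,q}\to\mathbb{O}_{p',q'}$ preserving the structure of $\mathbb{Z}_2^n$-graded algebra, then $s(p,q)=s(p',q')$.
   Context: $\mathbb{Z}_2=\{0,1\}$. For $p+q=n\ge3$, $\mathbb{O}_{p,q}$ is the real algebra with basis $\{u_x: x\in\mathbb{Z}_2^n\}$ and product $u_x\cdot u_y=(-1)^{f(x,y)}u_{x+y}$, where $f(x,y)=\sum_{1\le i<j<k\le n}(x_ix_jy_k+x_iy_jx_k+y_ix_jx_k)+\sum_{1\le i\le j\le n}x_iy_j+\sum_{1\le i\le p}x_iy_i$. Let $\alpha_{p,q}(x)=f(x,x)$ (so $u_x^2=(-1)^{\alpha_{p,q}(x)}u_0$), and define the statistics $s(p,q)=\#\{x\in\mathbb{Z}_2^n:\alpha_{p,q}(x)=1\}$. An isomorphism preserving the graded structure is an algebra isomorphism sending each homogeneous element (scalar multiple of some $u_x$) to a homogeneous element. *)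

(* Defs.v *)
From HB Require Import structures.
From mathcomp Require Import all_boot all_order all_algebra.
From mathcomp Require Import reals.
Set Implicit Arguments. Unset Strict Implicit. Unset Printing Implicit Defensive.
Import Order.TTheory GRing.Theory Num.Theory.
Local Open Scope ring_scope.

(* Z_2^n, as boolean vectors indexed by 'I_n (index i : 'I_n stands for i+1). *)
Notation Z2n n := {ffun 'I_n -> bool}.

Definition z2add n (x y : Z2n n) : Z2n n := [ffun i => x i (+) y i].

(* The twisting function f(x,y) of O_{p,q}, computed in Z_2 (true = 1).
   Indices 1 <= i <= n are shifted to 0 <= i < n, so "i <= p" becomes "i < p". *)
Definition ftwist n (p : nat) (x y : Z2n n) : bool :=
  odd (\sum_(i < n) \sum_(j < n) \sum_(k < n)
         (((i < j) && (j < k)) *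
          ((x i && x j && y k) + (x i && y j && x k) + (y i && x j && x k)))%N
       + \sum_(i < n) \sum_(j < n) ((i <= j) && x i && y j)
       + \sum_(i < n) ((i < p) && x i && y i))%N.

Definition alpha n p (x : Z2n n) : bool := ftwist p x x.

(* s(p,q) = #{x in Z_2^n : alpha_{p,q}(x) = 1}, with n = p + q. *)
Definition sstat n p : nat := #|[set x : Z2n n | alpha p x]|.

(* The underlying real vector space of O_{p,q}: coordinates w.r.t. the basis u_x. *)
Notation Oalg R n := {ffun Z2n n -> R}.

Definition ubasis (R : realType) n (x : Z2n n) : Oalg R n :=
  [ffun y => if y == x then 1 else 0].

(* product of O_{p,q}: u_x . u_y = (-1)^{f(x,y)} u_{x+y}, extended bilinearly *)
Definition mulO (R : realType) n (p : nat) (a b : Oalg R n) : Oalg R n :=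
  [ffun z => \sum_(x : Z2n n) \sum_(y : Z2n n | z2add x y == z)
               (-1) ^+ ftwist p x y * a x * b y].

Definition scaleO (R : realType) n (c : R) (a : Oalg R n) : Oalg R n :=
  [ffun y => c * a y].

Definition homogeneous (R : realType) n (a : Oalg R n) : Prop :=
  exists (c : R) (x : Z2n n), a = scaleO c (ubasis R x).

Definition graded_iso (R : realType) n (p p' : nat) (phi : Oalg R n -> Oalg R n) : Prop :=
  [/\ forall (c : R) (a b : Oalg R n), phi (scaleO c a + b) = scaleO c (phi a) + phi b,
      bijective phi,
      forall a b : Oalg R n, phi (mulO p a b) = mulO p' (phi a) (phi b)
    & forall a : Oalg R n, homogeneous a -> homogeneous (phi a)].

(* Main.v *)
Require Import Defs.
From mathcomp Require Import all_boot all_order all_algebra.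
From mathcomp Require Import reals.
From mathcomp Require Import lra.
Import Order.TTheory GRing.Theory Num.Theory.
Local Open Scope ring_scope.

Definition zz n : Z2n n := [ffun _ => false].

Lemma scaleO_ubE (R : realType) n c (x z : Z2n n) :
  scaleO c (ubasis R x) z = if z == x then c else 0.
Proof. by rewrite !ffunE; case: eqP => _; rewrite ?mulr1 ?mulr0. Qed.

Lemma mul_hom (R : realType) n p c d (x y : Z2n n) :
  mulO p (scaleO c (ubasis R x)) (scaleO d (ubasis R y)) =
  scaleO ((-1) ^+ ftwist p x y * c * d) (ubasis R (z2add x y)).
Proof.
apply/ffunP => z; rewrite scaleO_ubE ffunE.
rewrite [X in X = _](bigD1 x) //= [X in _ + X = _]big1 ?addr0 => [|x' nx]; last first.
  apply: big1 => y' _; rewrite scaleO_ubE.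
  by case: eqP nx => [-> /negP[]|_ _]; [exact/eqP | rewrite mulr0 mul0r].
rewrite big_mkcond [X in X = _](bigD1 y) //= [X in _ + X = _]big1 ?addr0 => [|y' ny]; last first.
  case: ifP => // _; rewrite [X in _ * X]scaleO_ubE.
  by case: eqP ny => [-> /negP[]|_ _]; [exact/eqP | rewrite mulr0].
rewrite !scaleO_ubE (eqxx x) (eqxx y) (eq_sym z).
by []. Qed.

Lemma z2addxx n (x : Z2n n) : z2add x x = zz n.
Proof. by apply/ffunP => i; rewrite !ffunE addbb. Qed.

Lemma alpha_zz n p : alpha p (zz n) = false.
Proof.
rewrite /alpha /ftwist.
rewrite big1 ?add0n; last by move=> i _; rewrite big1 // => j _; rewrite big1 // => k _; by rewrite !ffunE /= ?andbF ?muln0.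
rewrite big1 ?add0n; last by move=> i _; rewrite big1 // => j _; by rewrite !ffunE /= ?andbF.
by rewrite big1 // => i _; rewrite !ffunE /= ?andbF.
Qed.

Lemma scale1 (R : realType) n (a : Oalg R n) : scaleO 1 a = a.
Proof. by apply/ffunP => z; rewrite ffunE mul1r. Qed.

Theorem mainTheorem10 (R : realType) (n p q p' q' : nat) :
  (3 <= n)%N -> (p + q)%N = n -> (p' + q')%N = n ->
  (exists phi : Oalg R n -> Oalg R n, graded_iso p p' phi) ->
  sstat n p = sstat n p'.
Proof.
move=> _ _ _ [phi [lin bij mul hom]].
have inj := bij_inj bij.
have phi0 : phi 0 = 0.
  have := lin 1 0 0.
  have -> : scaleO 1 (0 : Oalg R n) + 0 = 0 by rewrite scale1 addr0.
  rewrite scale1 => /(congr1 (fun v => v - phi 0)) /=.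
  by rewrite subrr addrK => <-.
have scal : forall c a, phi (scaleO c a) = scaleO c (phi a).
  by move=> c a; have := lin c a 0; rewrite addr0 phi0 addr0.
have ex : forall x : Z2n n, exists cy : R * Z2n n,
    phi (ubasis R x) == scaleO cy.1 (ubasis R cy.2).
  move=> x; have [|c [y ->]] := hom (ubasis R x).
    by exists 1, x; rewrite scale1.
  by exists (c, y).
pose g x := xchoose (ex x).
pose c x := (g x).1; pose s x := (g x).2.
have phiu : forall x, phi (ubasis R x) = scaleO (c x) (ubasis R (s x)).
  by move=> x; apply/eqP; exact: (xchooseP (ex x)).
have cnz : forall x, c x != 0.
  move=> x; apply/eqP => c0.
  have : phi (ubasis R x) = phi 0.
    rewrite phi0 phiu c0; apply/ffunP => z; by rewrite !ffunE mul0r.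
  move/inj/ffunP/(_ x); rewrite !ffunE eqxx => /eqP; by rewrite oner_eq0.
have key : forall x, (-1) ^+ alpha p x * c (zz n) * (if zz n == s (zz n) then 1 else 0)
    = (-1) ^+ alpha p' (s x) * c x * c x.
  move=> x.
  have E := mul (ubasis R x) (ubasis R x).
  rewrite -[ubasis R x]scale1 mul_hom scale1 z2addxx !mulr1 scal phiu in E.
  rewrite !phiu mul_hom z2addxx in E.
  move/ffunP/(_ (zz n)): E; rewrite !ffunE (eqxx (zz n)) mulr1 => <-.
  by rewrite /alpha mulrA.
have s0 : s (zz n) = zz n.
  move: (key (zz n)); case: (zz n =P s (zz n)) => [e|_]; first by rewrite -e.
  rewrite /= mulr0 => /esym/eqP.
  by rewrite !mulf_eq0 signr_eq0 (negbTE (cnz _)).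
have c01 : c (zz n) = 1.
  move: (key (zz n)); rewrite s0 (eqxx (zz n)) !alpha_zz /= expr0 !mul1r mulr1 => h.
  by apply: (mulfI (cnz (zz n))); rewrite mulr1 -h.
have alph : forall x, alpha p x = alpha p' (s x).
  move=> x; move: (key x); rewrite c01 s0 eqxx !mulr1.
  have := cnz x; set cc := c x => nz.
  have pos : 0 < cc * cc by rewrite lt0r mulf_neq0 //= -expr2 sqr_ge0.
  case: (alpha p x); case: (alpha p' (s x)) => //= ; rewrite ?expr1 ?expr0 ?mul1r ?mulN1r.
    by move=> h; move: pos; rewrite -h ltr0N1.
  by rewrite mulNr => h; move: pos; rewrite -[cc * cc]opprK -h ltr0N1.
have sinj : injective s.
  move=> x y sxy; apply/eqP/negPn/negP => nxy.
  have : phi (scaleO (c y) (ubasis R x) + scaleO (- c x) (ubasis R y)) = phi 0.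
    rewrite lin phi0 scal !phiu sxy; apply/ffunP => z; rewrite !ffunE.
    by rewrite mulNr !mulrA (mulrC (c y)) addrN.
  move/inj/ffunP/(_ x); rewrite !ffunE (eqxx x).
  case: eqP => [e|_]; first by move: nxy; rewrite e eqxx.
  rewrite mulr0 mulr1 addr0.
  by move/eqP; rewrite (negbTE (cnz y)).
rewrite /sstat -[in RHS](card_preimset _ sinj); apply: eq_card => x.
by rewrite in_set inE in_set alph.
Qed.
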